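(* Let $G=(V,E)$ be a finite weakly connected directed graph with $V=\{1,\dots,n\}$, nonnegative adjacency matrix $W$ in which every row has a positive entry, $D=\operatorname{diag}(d_1,\dots,d_n)$ with $d_i=\sum_j W_{ij}$, and $P=D^{-1}W$. Let $A=\operatorname{diag}(\alpha_1,\dots,\alpha_n)$ with $\alpha_i\in[0,1)$ for all $i$, and let $v$ be a probability vector on $V$. Then the Location-of-Restart Personalized PageRank $\rho(v)$ (a row vector) satisfies $$\rho(v)=v^T[I-AP]^{-1}[I-A].$$
   Context: Consider the random walk $(X_t)_{t\ge0}$ on $V$ in which, at each step from the current node $i$, with probability $1-\alpha_i$ a restart occurs at time $t+1$ and $X_{t+1}$ is drawn from $v$, and otherwise $X_{t+1}=j$ with probability $P_{ij}$; its transition matrix is $AP+(I-A)\underline{1}v^T$, with $\underline{1}$ the all-ones column vector. The Location-of-Restart Personalized PageRank is $\rho_j(v)=\lim_{t\to\infty}\mathbb P(X_t=j\mid \text{a restart occurs at time } t+1)$, i.e. the long-run distribution of the node occupied just before a restart. *)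

(* Defs.v *)
From HB Require Import structures.
From mathcomp Require Import all_boot all_order all_algebra.
From mathcomp Require Import all_classical all_reals topology normedtype sequences.
Set Implicit Arguments. Unset Strict Implicit. Unset Printing Implicit Defensive.
Import Order.TTheory GRing.Theory Num.Theory.
Local Open Scope ring_scope.

Section LRPPR.
Variables (R : realType) (n : nat).

Definition weakly_connected (W : 'M[R]_n) : Prop :=
  forall i j : 'I_n, connect (fun a b : 'I_n => (0 < W a b) || (0 < W b a)) i j.

Definition degmx (W : 'M[R]_n) : 'M[R]_n := diag_mx (\row_i \sum_j W i j).
Definition rwmx (W : 'M[R]_n) : 'M[R]_n := invmx (degmx W) *m W.
Definition alphamx (alpha : 'I_n -> R) : 'M[R]_n := diag_mx (\row_i alpha i).

Definition is_prob_col (v : 'cV[R]_n) : Prop :=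
  (forall i, 0 <= v i 0) /\ \sum_i v i 0 = 1.
Definition is_prob_row (mu : 'rV[R]_n) : Prop :=
  (forall i, 0 <= mu 0 i) /\ \sum_i mu 0 i = 1.

Definition restart_trans (W : 'M[R]_n) (alpha : 'I_n -> R) (v : 'cV[R]_n)
  : 'M[R]_n :=
  alphamx alpha *m rwmx W + (1%:M - alphamx alpha) *m const_mx 1 *m v^T.

Definition law_at W alpha v (mu : 'rV[R]_n) (t : nat) : 'rV[R]_n :=
  mu *m (restart_trans W alpha v) ^+ t.

(* P(X_t = j, restart at time t+1) : the restart decision at step t is taken
   with probability 1 - alpha_{X_t}, independently of the past *)
Definition joint_restart W alpha v mu (t : nat) (j : 'I_n) : R :=
  law_at W alpha v mu t 0 j * (1 - alpha j).

Definition cond_restart W alpha v mu (t : nat) (j : 'I_n) : R :=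
  joint_restart W alpha v mu t j / \sum_i joint_restart W alpha v mu t i.

End LRPPR.

(* Main.v *)
Require Import Defs.
From HB Require Import structures.
From mathcomp Require Import all_boot all_order all_algebra.
From mathcomp Require Import all_classical all_reals topology normedtype sequences.
From mathcomp Require Import ring lra.
Import numFieldNormedType.Exports.
Import Order.TTheory GRing.Theory Num.Theory.
Local Open Scope ring_scope.
Local Open Scope classical_set_scope.
Lemma cvg_bound (R : realType) (f e : nat -> R) (l : R) :
  e @ \oo --> 0 -> (forall t, `|f t - l| <= e t) -> f @ \oo --> l.
Proof.
move=> he hb; apply: cvg_zero; apply: norm_cvg0.
apply: (@squeeze_cvgr _ _ _ _ (cst 0) e) => //; last exact: cvg_cst.
by near=> t; rewrite normr_ge0 /=; apply: hb.
Unshelve. all: by end_near.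
Qed.

Lemma contract (R : realType) n (T : 'M[R]_n) (w : 'cV[R]_n) c (x : 'rV[R]_n) :
 (forall i j, c * w j 0 <= T i j) -> (forall i, \sum_j T i j = 1) ->
 \sum_j w j 0 = 1 -> \sum_i x 0 i = 0 ->
 \sum_j `|(x *m T) 0 j| <= (1 - c) * \sum_i `|x 0 i|.
Proof.
move=> HT Hrow Hw Hx.
have E j : (x *m T) 0 j = \sum_i x 0 i * (T i j - c * w j 0).
  rewrite mxE; under [RHS]eq_bigr do rewrite mulrBr.
  by rewrite sumrB -mulr_suml Hx mul0r subr0.
apply: (le_trans (y := \sum_j \sum_i `|x 0 i| * (T i j - c * w j 0))).
  apply: ler_sum => j _; rewrite E; apply: (le_trans (ler_norm_sum _ _ _)).
  apply: ler_sum => i _; rewrite normrM [`|T i j - _|]ger0_norm // subr_ge0; exact: HT.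
rewrite exchange_big /= mulr_sumr; apply: ler_sum => i _.
rewrite -mulr_sumr sumrB Hrow -mulr_sumr Hw mulr1 mulrC //.
Qed.

Lemma nonneg_bound (R : realType) n (T : 'M[R]_n) a (x : 'rV[R]_n) :
 (forall i j, 0 <= T i j) -> (forall i, \sum_j T i j <= a) -> 0 <= a ->
 \sum_j `|(x *m T) 0 j| <= a * \sum_i `|x 0 i|.
Proof.
move=> HT Hrow Ha.
apply: (le_trans (y := \sum_j \sum_i `|x 0 i| * T i j)).
  apply: ler_sum => j _; rewrite mxE; apply: (le_trans (ler_norm_sum _ _ _)).
  apply: ler_sum => i _; rewrite normrM (ger0_norm (HT i j)) //.
rewrite exchange_big /= mulr_sumr; apply: ler_sum => i _.
rewrite -mulr_sumr mulrC; apply: ler_wpM2r => //.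
Qed.

Lemma sum_pres (R : realType) n (T : 'M[R]_n) (x : 'rV[R]_n) :
 (forall i, \sum_j T i j = 1) -> \sum_j (x *m T) 0 j = \sum_i x 0 i.
Proof.
move=> Hrow; under eq_bigr do rewrite mxE.
rewrite exchange_big /=; apply: eq_bigr => i _; by rewrite -mulr_sumr Hrow mulr1.
Qed.

Theorem theorem3 (R : realType) (n : nat) (W : 'M[R]_n) (alpha : 'I_n -> R)
  (v : 'cV[R]_n) :
  weakly_connected W ->
  (forall i j, 0 <= W i j) ->
  (forall i, exists j, 0 < W i j) ->
  (forall i, 0 <= alpha i < 1) ->
  is_prob_col v ->
  (1%:M - alphamx alpha *m rwmx W) \in unitmx /\
  forall mu : 'rV[R]_n, is_prob_row mu ->
  forall j : 'I_n,
    (fun t : nat => cond_restart W alpha v mu t j) @ \oo -->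
    ((v^T *m invmx (1%:M - alphamx alpha *m rwmx W) *m (1%:M - alphamx alpha)) 0 j : R)%R.
Proof.
move=> _ HW Hpos Halpha [Hv0 Hv1].
set A := alphamx alpha; set P := rwmx W; set M := A *m P.
pose d i := \sum_j W i j.
have dpos i : 0 < d i.
  have [j Hj] := Hpos i; rewrite /d (bigD1 j) //= ltr_pwDl //.
  by apply: sumr_ge0 => k _.
pose D' : 'M[R]_n := diag_mx (\row_i (d i)^-1).
have DD : D' *m degmx W = 1%:M.
  rewrite /degmx mulmx_diag -diag_const_mx; congr diag_mx.
  by apply/matrixP => i j; rewrite !mxE mulVf // gt_eqF // dpos.
have invD : invmx (degmx W) = D'.
  have [_ Du] := mulmx1_unit DD.
  have DD' := mulmx1C DD.
  by rewrite -[invmx _]mulmx1 -DD' mulmxA mulVmx ?mul1mx.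
have HP i j : P i j = (d i)^-1 * W i j.
  by rewrite /P /rwmx invD mul_diag_mx !mxE.
have HPnn i j : 0 <= P i j.
  by rewrite HP mulr_ge0 // invr_ge0 ltW.
have HProw i : \sum_j P i j = 1.
  under eq_bigr do rewrite HP.
  by rewrite -mulr_sumr mulVf // gt_eqF.
have HM i j : M i j = alpha i * P i j.
  by rewrite /M /A /alphamx mul_diag_mx !mxE.
set T := restart_trans W alpha v.
set u : 'cV[R]_n := (1%:M - A) *m const_mx 1.
have Hu i : u i 0 = 1 - alpha i.
  rewrite /u mulmxBl mul1mx /A /alphamx mul_diag_mx !mxE mulr1.
  done.
have HT i j : T i j = alpha i * P i j + (1 - alpha i) * v j 0.
  rewrite /T /restart_trans -/u -/A -/P -/M mxE HM [X in _ + X]mxE big_ord1 mxE Hu.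
  by rewrite mxE.
pose a := \big[Order.max/0]_i alpha i.
have Ha i : alpha i <= a by apply: le_bigmax.
have Ha1 : a < 1.
  by apply: bigmax_lt => // i _; case/andP: (Halpha i).
have Ha0 : 0 <= a by apply: bigmax_ge_id.
have HTrow i : \sum_j T i j = 1.
  under eq_bigr do rewrite HT.
  by rewrite big_split /= -!mulr_sumr HProw Hv1 !mulr1 addrC subrK.
have HTlow i j : (1 - a) * v j 0 <= T i j.
  rewrite HT -subr_ge0.
  have -> : alpha i * P i j + (1 - alpha i) * v j 0 - (1 - a) * v j 0
     = alpha i * P i j + (a - alpha i) * v j 0 by ring.
  case/andP: (Halpha i) => a0 _.
  by rewrite addr_ge0 // mulr_ge0 // subr_ge0.
have HMrow i : \sum_j M i j <= a.
  under eq_bigr do rewrite HM.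
  by rewrite -mulr_sumr HProw mulr1.
have HMnn i j : 0 <= M i j.
  by rewrite HM mulr_ge0 // ?HPnn //; case/andP: (Halpha i).
have IMu : (1%:M - M) \in unitmx.
  rewrite -row_free_unit; apply: inj_row_free => x Hx.
  have xM : x = x *m M.
    by apply/eqP; rewrite -subr_eq0 -[X in X - _]mulmx1 -mulmxBr Hx.
  have H1 := @nonneg_bound _ _ _ _ x HMnn HMrow Ha0.
  rewrite -xM in H1.
  have H2 : \sum_i `|x 0 i| = 0.
    apply/eqP; rewrite eq_le sumr_ge0 // andbT.
    have : (1 - a) * \sum_i `|x 0 i| <= 0 by rewrite mulrBl mul1r subr_le0.
    by rewrite pmulr_rle0 // subr_gt0.
  apply/matrixP => i j; rewrite ord1 mxE.
  have /psumr_eq0P H3 := H2.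
  by apply/normr0_eq0; apply: H3.
split => //.
move=> mu [Hmu0 Hmu1] j.
set IM := 1%:M - M.
pose pi0 := v^T *m invmx IM.
have P1 : P *m const_mx 1 = const_mx 1 :> 'cV_n.
  apply/matrixP => i k; rewrite !mxE -[RHS](HProw i); apply: eq_bigr => k' _; rewrite !mxE mulr1 //=.
have IMone : IM *m const_mx 1 = u.
  by rewrite /IM mulmxBl mul1mx /M -mulmxA P1 /u mulmxBl mul1mx.
have pi0u : pi0 *m u = 1%:M.
  rewrite -IMone mulmxA (mulmxKV IMu).
  apply/matrixP => i k; rewrite !ord1 !mxE eqxx /=; rewrite -[in RHS]Hv1; apply: eq_bigr => k' _; rewrite !mxE mulr1 //=.
have pi0T : pi0 *m T = pi0.
  rewrite /T /restart_trans -/A -/P -/M -/u mulmxDr mulmxA pi0u mul1mx.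
  have : pi0 *m IM = v^T by rewrite (mulmxKV IMu).
  by rewrite /IM mulmxBr mulmx1 => H; rewrite -H addrC subrK.
have pi0Tt t : pi0 *m T ^+ t = pi0.
  elim: t => [|t IH]; first by rewrite expr0 mulmx1.
  by rewrite exprSr mulmxA IH pi0T.
pose Z := \sum_i pi0 0 i.
pose x t := (Z *: mu - pi0) *m T ^+ t.
have xE t : x t = Z *: law_at W alpha v mu t - pi0.
  by rewrite /x mulmxBl -scalemxAl pi0Tt.
have xS t : x t.+1 = x t *m T by rewrite /x exprSr mulmxA.
have xsum t : \sum_i x t 0 i = 0.
  elim: t => [|t IH].
    rewrite /x expr0 mulmx1 (eq_bigr (fun i => Z * mu 0 i - pi0 0 i)); last first.
      by move=> i _; rewrite !mxE.
    by rewrite sumrB -mulr_sumr Hmu1 mulr1 subrr.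
  by rewrite xS sum_pres.
pose K := \sum_i `|x 0%N 0 i|.
have xnorm t : \sum_i `|x t 0 i| <= a ^+ t * K.
  elim: t => [|t IH]; first by rewrite expr0 mul1r.
  rewrite xS; apply: (le_trans (@contract _ _ T v (1 - a) (x t) HTlow HTrow Hv1 (xsum t))).
  have -> : 1 - (1 - a) = a by ring.
  by rewrite exprS -mulrA ler_wpM2l.
have ecvg : (fun t => a ^+ t * K) @ \oo --> 0.
  have := cvgM (cvg_expr (z := a) _) (cvg_cst K); rewrite mul0r; apply.
  by rewrite ger0_norm.
have xle t i : `|x t 0 i| <= a ^+ t * K.
  apply: (le_trans _ (xnorm t)); rewrite (bigD1 i) //= lerDl sumr_ge0 //.
have Hl : (v^T *m invmx IM *m (1%:M - A)) 0 j = pi0 0 j * (1 - alpha j).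
  by rewrite -/pi0 mulmxBr mulmx1 /A /alphamx mul_mx_diag !mxE mulrBr mulr1.
rewrite Hl.
pose N t := Z * joint_restart W alpha v mu t j.
pose Dn t := Z * \sum_i joint_restart W alpha v mu t i.
have HN : N @ \oo --> pi0 0 j * (1 - alpha j).
  apply: (cvg_bound _ _ _ _ ecvg) => t.
  have -> : N t - pi0 0 j * (1 - alpha j) = x t 0 j * (1 - alpha j).
    by rewrite /N /joint_restart xE !mxE; ring.
  case/andP: (Halpha j) => a0 a1.
  have ha : 0 <= 1 - alpha j by rewrite subr_ge0 ltW.
  rewrite normrM (ger0_norm ha).
  apply: (le_trans _ (xle t j)); rewrite ler_piMr // ?normr_ge0 //.
  by rewrite lerBlDr lerDl.
have sum1 : \sum_i pi0 0 i * (1 - alpha i) = 1.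
  rewrite -[RHS](_ : (pi0 *m u) 0 0 = 1); last by rewrite pi0u mxE.
  by rewrite [RHS]mxE; apply: eq_bigr => i _; rewrite Hu.
have HD : Dn @ \oo --> (1 : R).
  apply: (cvg_bound _ _ _ _ ecvg) => t.
  have -> : Dn t - 1 = \sum_i x t 0 i * (1 - alpha i).
    rewrite /Dn -[X in _ - X]sum1 mulr_sumr -sumrB; apply: eq_bigr => i _.
    by rewrite /joint_restart xE !mxE; ring.
  apply: (le_trans (ler_norm_sum _ _ _)).
  apply: (le_trans _ (xnorm t)); apply: ler_sum => i _.
  case/andP: (Halpha i) => a0 a1.
  have ha : 0 <= 1 - alpha i by rewrite subr_ge0 ltW.
  rewrite normrM (ger0_norm ha).
  rewrite ler_piMr // ?normr_ge0 //.
  by rewrite lerBlDr lerDl.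
have Z0 : Z != 0.
  apply/negP => /eqP Z0.
  have : Dn @ \oo --> 0.
    have -> : Dn = fun _ => 0 by apply/funext => t; rewrite /Dn Z0 mul0r.
    exact: cvg_cst.
  move=> H0; have := cvg_unique (@Rhausdorff R) H0 HD.
  by move=> /(_ _) /eqP; rewrite eq_sym oner_eq0.
have -> : (fun t => cond_restart W alpha v mu t j) = (fun t => N t * (Dn t)^-1).
  apply/funext => t; rewrite /cond_restart /N /Dn /=.
  by rewrite invfM mulrACA mulfV // mul1r.
have := cvgM HN (cvgV (oner_neq0 _) HD).
by rewrite invr1 mulr1; apply.
Qed.
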